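(* Let $d\geqslant 2$ and $a=(a_1,\dots,a_d)\in\mathbb{Z}_p^d$ with $a_d\neq 0$. Let $L$ be the $\mathbb{Z}_p$-Lie lattice $\mathbb{Z}_p^{d+1}$ with canonical basis $(x_0,\dots,x_d)$ and bracket determined by $[x_i,x_j]=0$ for $1\leqslant i,j\leqslant d$, $[x_0,x_1]=\sum_{i=1}^d a_ix_i$, and $[x_0,x_{i+1}]=x_i$ for $1\leqslant i<d$. Then $L$ admits a finite-index subalgebra that is not self-similar of index $p$.
   Context: $p$ is any prime. A virtual endomorphism of a $\mathbb{Z}_p$-Lie lattice $M$ is a homomorphism of algebras $\varphi:N\to M$ with $N\subseteq M$ a finite-index subalgebra, of index $[M:N]$. An ideal $I$ of $M$ is $\varphi$-invariant if it lies in the domain of every power of $\varphi$ and $\varphi(I)\subseteq I$; $\varphi$ is simple if no non-zero ideal is $\varphi$-invariant. $M$ is self-similar of index $p^k$ if it has a simple virtual endomorphism of index $p^k$. *)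

(* Defs.v *)
From HB Require Import structures.
From mathcomp Require Import all_boot all_order all_algebra.
From mathcomp Require Import boolp.
From Stdlib Require Import ProofIrrelevance FunctionalExtensionality.
Set Implicit Arguments. Unset Strict Implicit. Unset Printing Implicit Defensive.
Import Order.TTheory GRing.Theory Num.Theory.
Local Open Scope ring_scope.

(* The ring Z_p of p-adic integers, as the inverse limit of Z/p^n Z:   *)
(* coherent sequences (x_n)_n with x_n in [0, p^n) and                 *)
(* x_{n+1} = x_n mod p^n.  As for 'F_p in MathComp, the modulus used   *)
(* is q := maxn p 2, which equals p for every prime p.                *)

Section Padic.
Variable p : nat.
Definition zp_base : nat := maxn p 2.
Definition zpM (n : nat) : int := (zp_base ^ n)%:Z.

Definition zp_coherent (x : nat -> int) : Prop :=
  forall n, x n = modz (x n.+1) (zpM n).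

Definition zp : Type := {x : nat -> int | zp_coherent x}.

Lemma zpM_S n : zpM n.+1 = (zp_base%:Z * zpM n)%R.
Proof. by rewrite /zpM expnS PoszM. Qed.

Lemma modz_dvd_mul (m c d : int) : modz (modz m (c * d)) d = modz m d.
Proof.
by rewrite {2}(divz_eq m (c * d)) mulrA modzMDl.
Qed.

Lemma zp_mkP (f : nat -> int) :
  (forall n, modz (f n.+1) (zpM n) = modz (f n) (zpM n)) ->
  zp_coherent (fun n => modz (f n) (zpM n)).
Proof. by move=> Hf n; rewrite zpM_S modz_dvd_mul Hf. Qed.

Lemma zp_red (x : zp) n : modz (sval x n) (zpM n) = sval x n.
Proof. by case: x => x Hx /=; rewrite Hx modz_mod. Qed.

Lemma zp_cohS (x : zp) n : modz (sval x n.+1) (zpM n) = sval x n.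
Proof. by case: x => x Hx /=; rewrite -Hx. Qed.

Lemma zp_eq (x y : zp) : (forall n, sval x n = sval y n) -> x = y.
Proof.
case: x y => [x Hx] [y Hy] /= H.
have E : x = y by apply: functional_extensionality.
subst y; by rewrite (proof_irrelevance _ Hx Hy).
Qed.

HB.instance Definition _ := gen_eqMixin zp.
HB.instance Definition _ := gen_choiceMixin zp.

Definition zp_mk (f : nat -> int)
  (Hf : forall n, modz (f n.+1) (zpM n) = modz (f n) (zpM n)) : zp :=
  exist _ _ (zp_mkP Hf).

Lemma zp_addP (x y : zp) n :
  modz (sval x n.+1 + sval y n.+1) (zpM n) = modz (sval x n + sval y n) (zpM n).
Proof. by rewrite -modzDm !zp_cohS. Qed.
Lemma zp_mulP (x y : zp) n :
  modz (sval x n.+1 * sval y n.+1) (zpM n) = modz (sval x n * sval y n) (zpM n).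
Proof. by rewrite -modzMm !zp_cohS. Qed.
Lemma zp_oppP (x : zp) n :
  modz (- sval x n.+1) (zpM n) = modz (- sval x n) (zpM n).
Proof. by rewrite -modzNm !zp_cohS. Qed.
Lemma zp_cstP (c : int) n : modz c (zpM n) = modz c (zpM n). Proof. by []. Qed.

Definition zp_add (x y : zp) : zp := zp_mk (zp_addP x y).
Definition zp_mul (x y : zp) : zp := zp_mk (zp_mulP x y).
Definition zp_opp (x : zp) : zp := zp_mk (zp_oppP x).
Definition zp_zero : zp := zp_mk (fun n => zp_cstP 0 n).
Definition zp_one : zp := zp_mk (fun n => zp_cstP 1 n).

Lemma zp_addA : associative zp_add.
Proof.
move=> x y z; apply: zp_eq => n /=.
by rewrite modzDml modzDmr addrA.
Qed.
Lemma zp_addC : commutative zp_add.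
Proof. by move=> x y; apply: zp_eq => n /=; rewrite addrC. Qed.
Lemma zp_add0 : left_id zp_zero zp_add.
Proof. by move=> x; apply: zp_eq => n /=; rewrite modzDml add0r zp_red. Qed.
Lemma zp_addN : left_inverse zp_zero zp_opp zp_add.
Proof. by move=> x; apply: zp_eq => n /=; rewrite modzDml addNr. Qed.

HB.instance Definition _ := GRing.isZmodule.Build zp zp_addA zp_addC zp_add0 zp_addN.

Lemma zp_mulA : associative zp_mul.
Proof.
move=> x y z; apply: zp_eq => n /=.
by rewrite modzMml modzMmr mulrA.
Qed.
Lemma zp_mulC : commutative zp_mul.
Proof. by move=> x y; apply: zp_eq => n /=; rewrite mulrC. Qed.
Lemma zp_mul1 : left_id zp_one zp_mul.
Proof. by move=> x; apply: zp_eq => n /=; rewrite modzMml mul1r zp_red. Qed.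
Lemma zp_mulD : left_distributive zp_mul zp_add.
Proof.
move=> x y z; apply: zp_eq => n /=.
by rewrite modzMml modzDm mulrDl.
Qed.
Lemma zp_one_neq0 : zp_one != zp_zero.
Proof.
apply/eqP => /(congr1 (fun x : zp => sval x 1)) /=.
rewrite /zpM expn1 modz_small ?mod0z //.
by rewrite /zp_base; apply/andP; split => //; rewrite ltz_nat; apply: leq_trans (leq_maxr _ _).
Qed.

HB.instance Definition _ :=
  GRing.Zmodule_isComNzRing.Build zp zp_mulA zp_mulC zp_mul1 zp_mulD zp_one_neq0.

End Padic.

Section LieLattice.
Variables (R : comNzRingType) (n : nat).
Local Notation V := 'rV[R]_n.

Definition struct_bracket (B : 'I_n -> 'I_n -> V) (u v : V) : V :=
  \sum_(i < n) \sum_(j < n) (u 0 i * v 0 j) *: B i j.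

Variable br : V -> V -> V.

Definition submodule (S : V -> Prop) : Prop :=
  [/\ S 0, (forall x y, S x -> S y -> S (x + y)) &
      (forall (c : R) x, S x -> S (c *: x))].

Definition subalgebra (M N : V -> Prop) : Prop :=
  [/\ submodule N, (forall x, N x -> M x) &
      (forall x y, N x -> N y -> N (br x y))].

Definition has_index (M N : V -> Prop) (k : nat) : Prop :=
  exists r : 'I_k -> V,
    [/\ (forall i, M (r i)),
        (forall i j, N (r i - r j) -> i = j) &
        (forall x, M x -> exists i, N (x - r i))].

Definition finite_index (M N : V -> Prop) : Prop := exists k, has_index M N k.

Definition ideal (M I : V -> Prop) : Prop :=
  [/\ submodule I, (forall x, I x -> M x) &
      (forall x y, M x -> I y -> I (br x y))].

(* (phi is represented by a total map, only its values on N matter).  *)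
Definition virtual_endo (M N : V -> Prop) (phi : V -> V) (k : nat) : Prop :=
  [/\ subalgebra M N, has_index M N k,
      (forall x, N x -> M (phi x)) &
   [/\

      (forall x y, N x -> N y -> phi (x + y) = phi x + phi y),
      (forall (c : R) x, N x -> phi (c *: x) = c *: phi x) &
      (forall x y, N x -> N y -> phi (br x y) = br (phi x) (phi y))]].

Fixpoint pow_dom (M N : V -> Prop) (phi : V -> V) (m : nat) : V -> Prop :=
  match m with
  | 0 => M
  | m'.+1 => fun x => pow_dom M N phi m' x /\ N (iter m' phi x)
  end.

Definition phi_invariant (M N : V -> Prop) (phi : V -> V) (I : V -> Prop) : Prop :=
  (forall m x, I x -> pow_dom M N phi m x) /\ (forall x, I x -> I (phi x)).

Definition simple_ve (M N : V -> Prop) (phi : V -> V) : Prop :=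
  forall I, ideal M I -> phi_invariant M N phi I -> forall x, I x -> x = 0.

Definition self_similar_index (M : V -> Prop) (k : nat) : Prop :=
  exists (N : V -> Prop) (phi : V -> V), virtual_endo M N phi k /\ simple_ve M N phi.

End LieLattice.

(* The d-tuple (a_1,..,a_d) is a : 'I_d -> R with a_i = a (i-1).       *)
Definition Lcoef (R : comNzRingType) (d : nat) (a : 'I_d -> R) (k : nat) : R :=
  if insub k.-1 is Some i then (if (1 <= k)%N then a i else 0) else 0.

Definition Ltable (R : comNzRingType) (d : nat) (a : 'I_d -> R)
    (i j : 'I_d.+1) : 'rV[R]_d.+1 :=
  \row_(k < d.+1)
    (if (i == 0 :> nat) && (j == 1 :> nat) then Lcoef a k
     else if (i == 1 :> nat) && (j == 0 :> nat) then - Lcoef a k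
     else if (i == 0 :> nat) && (2 <= j)%N then ((k : nat) == j.-1)%:R
     else if (j == 0 :> nat) && (2 <= i)%N then - ((k : nat) == i.-1)%:R
     else 0).

Definition Lbracket (R : comNzRingType) (d : nat) (a : 'I_d -> R) :=
  struct_bracket (Ltable a).

(* Main.v *)
Require Import Defs.
From HB Require Import structures.
From mathcomp Require Import all_boot all_order all_algebra.
From mathcomp Require Import boolp.
From mathcomp Require Import ring zify.
Set Implicit Arguments. Unset Strict Implicit. Unset Printing Implicit Defensive.
Import Order.TTheory GRing.Theory Num.Theory.
Local Open Scope ring_scope.

Section ZpLemmas.
Variable p : nat.
Hypothesis Hp : prime p.
Local Notation R := (zp p).

Lemma zpbase : zp_base p = p.
Proof. by rewrite /zp_base; apply/maxn_idPl; apply: prime_gt1. Qed.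

Lemma zpM_gt0 n : 0 < zpM p n.
Proof. by rewrite /zpM ltz_nat expn_gt0 zpbase prime_gt0. Qed.

Lemma zpM_neq0 n : zpM p n != 0.
Proof. by rewrite gt_eqF // zpM_gt0. Qed.

Lemma sval_add (x y : R) n : sval (x + y) n = modz (sval x n + sval y n) (zpM p n).
Proof. by []. Qed.
Lemma sval_mul (x y : R) n : sval (x * y) n = modz (sval x n * sval y n) (zpM p n).
Proof. by []. Qed.
Lemma sval_opp (x : R) n : sval (- x) n = modz (- sval x n) (zpM p n).
Proof. by []. Qed.
Lemma sval_one n : sval (1 : R) n = modz 1 (zpM p n).
Proof. by []. Qed.
Lemma sval_zero n : sval (0 : R) n = 0.
Proof. by rewrite /= mod0z. Qed.

Lemma zpM_split m n : (m <= n)%N -> zpM p n = ((zp_base p ^ (n - m))%:Z * zpM p m).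
Proof. by move=> H; rewrite /zpM -PoszM -expnD subnK. Qed.

Lemma zp_coh (x : R) m n : (m <= n)%N -> sval x m = modz (sval x n) (zpM p m).
Proof.
elim: n => [|n IH]; first by rewrite leqn0 => /eqP->; rewrite zp_red.
rewrite leq_eqVlt => /orP[/eqP->|H]; first by rewrite zp_red.
have H' : (m <= n)%N := H.
by rewrite IH // -(zp_cohS x n) (zpM_split H') modz_dvd_mul.
Qed.

Lemma sval_ge0 (x : R) n : 0 <= sval x n.
Proof. by rewrite -zp_red modz_ge0 // zpM_neq0. Qed.
Lemma sval_lt (x : R) n : sval x n < zpM p n.
Proof. by rewrite -zp_red ltz_pmod // zpM_gt0. Qed.

Lemma sval_nat (m : nat) n : sval (m%:R : R) n = modz m%:Z (zpM p n).
Proof.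
elim: m => [|m IH]; first by rewrite sval_zero mod0z.
by rewrite -addn1 natrD PoszD sval_add IH sval_one modzDm.
Qed.

Lemma sval_int (z : int) n : sval (z%:~R : R) n = modz z (zpM p n).
Proof.
case: z => m; first by rewrite -pmulrn sval_nat.
by rewrite NegzE mulrNz sval_opp -pmulrn sval_nat modzNm.
Qed.

Lemma zp_eq0 (x : R) : (forall n, sval x n = 0) -> x = 0.
Proof. by move=> H; apply: zp_eq => n; rewrite H sval_zero. Qed.

Local Notation P := (p%:R : R).

Lemma zpM1 : zpM p 1 = p%:Z.
Proof. by rewrite /zpM expn1 zpbase. Qed.

Lemma zp_dvd_sval (x : R) m : sval x 1 = 0 -> (0 < m)%N -> (p%:Z %| sval x m)%Z.
Proof.
move=> H1 Hm; apply/dvdz_mod0P; by rewrite -zpM1 -zp_coh.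
Qed.

Lemma zp_div1 (x : R) : sval x 1 = 0 -> exists y, x = P * y.
Proof.
move=> H1.
have pgt0 : (0 < p%:Z) by rewrite ltz_nat prime_gt0.
pose f n := divz (sval x n.+1) p%:Z.
have Hf : forall n, modz (f n.+1) (zpM p n) = modz (f n) (zpM p n).
  move=> n; rewrite /f.
  have Hd := zp_dvd_sval (m := n.+2) H1 (ltn0Sn _).
  set q := (sval x n.+2 %/ p%:Z)%Z; rewrite -/q.
  have E : sval x n.+2 = p%:Z * q by rewrite mulrC divzK.
  rewrite -(zp_cohS x n.+1) zpM_S zpbase E -mulz_modr // !mulKz ?gt_eqF // modz_mod //.
exists (zp_mk Hf); apply: zp_eq => n /=.
rewrite sval_nat modzMml modzMmr /f mulrC divzK ?zp_cohS //.
exact: zp_dvd_sval.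
Qed.

Lemma zp_unit (m : nat) : (0 < m < p)%N -> exists u : R, u * m%:R = 1.
Proof.
case/andP=> m0 mp.
have cop : forall n, coprimez m%:Z (zpM p n).
  move=> n; rewrite coprimezE /zpM zpbase !absz_nat; apply: coprimeXr.
  by rewrite coprime_sym prime_coprime //; apply/negP => /(dvdn_leq m0); rewrite leqNgt mp.
pose f n := projT1 (Bezoutz m%:Z (zpM p n)).
have Hf0 : forall n, exists v, f n * m%:Z + v * zpM p n = 1.
  move=> n; rewrite /f; case: (Bezoutz _ _) => u [v Hv] /=; exists v.
  by rewrite Hv; apply/eqP; apply: (cop n).
have Hf : forall n, modz (f n.+1) (zpM p n) = modz (f n) (zpM p n).
  move=> n; apply/eqP; rewrite eqz_mod_dvd.
  rewrite -(@Gauss_dvdzl _ _ m%:Z); last by rewrite coprimez_sym.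
  have [va ha] := Hf0 n.+1; have [vb hb] := Hf0 n.
  have -> : (f n.+1 - f n) * m%:Z = (vb - va * (zp_base p)%:Z) * zpM p n.
    apply/eqP; rewrite -subr_eq0; apply/eqP.
    transitivity ((f n.+1 * m%:Z + va * zpM p n.+1) - (f n * m%:Z + vb * zpM p n)).
      by rewrite zpM_S; ring.
    by rewrite ha hb subrr.
  exact: dvdz_mull.
exists (zp_mk Hf); apply: zp_eq => n /=.
rewrite sval_nat modzMml modzMmr.
have [v hv] := Hf0 n.
have -> : f n * m%:Z = (- v) * zpM p n + 1 by rewrite -hv; ring.
by rewrite modzMDl.
Qed.

Lemma zp_mul_eq0 (x y : R) : x * y = 0 -> x = 0 \/ y = 0.
Proof.
move=> Hxy.
case: (pselect (x = 0)) => Hx; first by left.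
case: (pselect (y = 0)) => Hy; first by right.
exfalso.
have [n Hn] : exists n, sval x n != 0.
  case: (pselect (exists n, sval x n != 0)) => // H; exfalso; apply: Hx; apply: zp_eq0 => k.
  by apply/eqP; apply/negPn/negP => Hk; apply: H; exists k.
have [m Hm] : exists n, sval y n != 0.
  case: (pselect (exists n, sval y n != 0)) => // H; exfalso; apply: Hy; apply: zp_eq0 => k.
  by apply/eqP; apply/negPn/negP => Hk; apply: H; exists k.
have HK : sval (x * y) (n + m)%N = sval (0:R) (n + m)%N by rewrite Hxy.
rewrite sval_mul sval_zero in HK.
set X := sval x (n + m)%N in HK; set Y := sval y (n + m)%N in HK.
have X0 : 0 <= X by apply: sval_ge0.
have Y0 : 0 <= Y by apply: sval_ge0.
have Xn : ~~ (zpM p n %| X)%Z.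
  apply/negP => /dvdz_mod0P; rewrite /X -zp_coh ?leq_addr //; exact/eqP.
have Ym : ~~ (zpM p m %| Y)%Z.
  apply/negP => /dvdz_mod0P; rewrite /Y -zp_coh ?leq_addl //; exact/eqP.
move/dvdz_mod0P: HK; rewrite !dvdzE abszM /zpM !absz_nat zpbase => HK.
move: Xn Ym; rewrite !dvdzE /zpM !absz_nat zpbase => Xn Ym.
have aX : (0 < `|X|)%N by rewrite lt0n; apply: contra Xn => /eqP->; rewrite dvdn0.
have aY : (0 < `|Y|)%N by rewrite lt0n; apply: contra Ym => /eqP->; rewrite dvdn0.
move: HK Xn Ym; rewrite !pfactor_dvdn ?muln_gt0 ?aX ?aY // lognM // -!ltnNge.
move=> H1 H2 H3; lia.
Qed.

Lemma P_neq0 : P != 0.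
Proof.
apply/negP => /eqP H; have := congr1 (fun z : R => sval z 2) H.
rewrite sval_nat sval_zero /zpM zpbase modz_small; first by move=> /eqP; rewrite eqz_nat => /eqP p0; move: (prime_gt0 Hp); rewrite p0.
rewrite lez_nat leq0n /= ltz_nat expnS -{1}(muln1 p) ltn_pmul2l ?prime_gt0 //.
by rewrite expn1 prime_gt1.
Qed.

Lemma zp_mulIf (c x y : R) : c != 0 -> c * x = c * y -> x = y.
Proof.
move=> Hc H; have : c * (x - y) = 0 by rewrite mulrBr H subrr.
case/zp_mul_eq0 => [/eqP|/eqP]; first by rewrite (negbTE Hc).
by rewrite subr_eq0 => /eqP.
Qed.

Lemma Pexp_neq0 k : P ^+ k != 0.
Proof.
elim: k => [|k IH]; first by rewrite expr0 oner_neq0.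
rewrite exprS; apply/negP => /eqP/zp_mul_eq0 [] /eqP; first by rewrite (negbTE P_neq0).
by rewrite (negbTE IH).
Qed.

Lemma zp_mul_neq0 (x y : R) : x != 0 -> y != 0 -> x * y != 0.
Proof.
move=> Hx Hy; apply/negP => /eqP/zp_mul_eq0 [] /eqP.
  by rewrite (negbTE Hx). by rewrite (negbTE Hy).
Qed.

End ZpLemmas.


Lemma sum_if_eq (R : nmodType) n (F : 'I_n -> R) (j : 'I_n) :
  \sum_i (if i == j then F i else 0) = F j.
Proof. by rewrite (bigD1 j) //= eqxx big1 ?addr0 // => i /negbTE ->. Qed.

Lemma sum_prod_diff (R : comPzRingType) n (A B C D : 'I_n -> R) :
  \sum_i \sum_j (A i * B j - C i * D j) =
  (\sum_i A i) * (\sum_j B j) - (\sum_i C i) * (\sum_j D j).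
Proof.
rewrite !big_distrl /= -sumrB; apply: eq_bigr => i _.
by rewrite !big_distrr /= -sumrB.
Qed.

Section Vec.
Variables (p d : nat) (a : 'I_d -> zp p).
Hypothesis Hp : prime p.
Hypothesis Hd : (2 <= d)%N.
Hypothesis Ha : forall i : 'I_d, (i : nat) = d.-1 -> a i != 0.
Local Notation R := (zp p).
Local Notation V := 'rV[R]_d.+1.

Definition idx1 : 'I_d.+1 := inord 1.
Lemma i1E : (idx1 : nat) = 1%N.
Proof. by rewrite inordK // ltnS ltnW. Qed.

Definition Cmx : 'M[R]_d.+1 :=
  \matrix_(i, k) ((i == 1%N :> nat)%:R * Lcoef a k + ((i == k.+1 :> nat) && (0 < k < d)%N)%:R).
Definition Cop (v : V) : V := v *m Cmx.

Lemma B2 (m k : nat) : (m.+2 < d.+1)%N -> ((m.+2 == k.+1) && (0 < k < d)%N) = (k == m.+1).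
Proof. by move=> H; rewrite eqSS eq_sym; case: eqP => //= ->. Qed.
Lemma B1 (k : nat) : ((1 == k.+1) && (0 < k < d)%N) = false.
Proof. by case: k. Qed.

Lemma Ltable_E (i j k : 'I_d.+1) : Ltable a i j 0 k =
  (i == 0%N :> nat)%:R * ((j == 1%N :> nat)%:R * Lcoef a k + ((j == k.+1 :> nat) && (0 < k < d)%N)%:R)
  - (j == 0%N :> nat)%:R * ((i == 1%N :> nat)%:R * Lcoef a k + ((i == k.+1 :> nat) && (0 < k < d)%N)%:R).
Proof.
rewrite mxE.
case: i => [[|[|i]] Hi]; case: j => [[|[|j]] Hj] /=; rewrite ?B1 ?B2 //=;
  rewrite ?(mul1r, mul0r, mulr1, mulr0, add0r, addr0, subr0, sub0r, oppr0) //.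
Qed.

Lemma Lbr_E (u v : V) : Lbracket a u v = u 0 0 *: Cop v - v 0 0 *: Cop u.
Proof.
apply/rowP => k; rewrite /Lbracket /struct_bracket !mxE summxE.
transitivity (\sum_(i < d.+1) \sum_(j < d.+1)
   ((u 0 i * (i == 0%N :> nat)%:R) * (v 0 j * Cmx j k) - (u 0 i * Cmx i k) * (v 0 j * (j == 0%N :> nat)%:R))).
  apply: eq_bigr => i _; rewrite summxE; apply: eq_bigr => j _.
  by rewrite mxE Ltable_E /Cmx !mxE; ring.
rewrite sum_prod_diff.
have E : forall w : V, \sum_(i < d.+1) w 0 i * (i == 0%N :> nat)%:R = w 0 0.
  move=> w; rewrite (bigD1 ord0) //= mulr1 big1 ?addr0 // => i Hi.
  by rewrite (_ : (i == 0%N :> nat) = false) ?mulr0 //; apply/negbTE; exact: Hi.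
by rewrite !E; congr (_ - _); rewrite mulrC.
Qed.

Definition ev (i : 'I_d.+1) : V := delta_mx 0 i.
Definition avecv : V := \row_k Lcoef a k.

Lemma ev_coord (i k : 'I_d.+1) : ev i 0 k = (k == i)%:R.
Proof. by rewrite /ev mxE. Qed.

Lemma eq_inord (x : 'I_d.+1) n : (n < d.+1)%N -> (x == inord n) = (x == n :> nat).
Proof. by move=> H; rewrite -(inj_eq val_inj) /= inordK. Qed.

Lemma Lcoef0 : Lcoef a 0 = 0.
Proof. by rewrite /Lcoef; case: insub. Qed.

Lemma Lcoefd : Lcoef a d != 0.
Proof.
rewrite /Lcoef; case: insubP => [i _ Hi|H].
  rewrite (_ : (1 <= d)%N) ?(ltnW Hd) //; apply: Ha; exact: Hi.
by exfalso; move/negP: H; apply; rewrite prednK ?leqnn // ltnW.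
Qed.

Lemma Cop_coord (v : V) (k : 'I_d.+1) :
  Cop v 0 k = v 0 idx1 * Lcoef a k + (if (0 < k < d)%N then v 0 (inord k.+1) else 0).
Proof.
rewrite /Cop mxE.
under eq_bigr => j _ do rewrite /Cmx mxE mulrDr mulrA.
rewrite big_split /=; congr (_ + _).
  rewrite -big_distrl /=; congr (_ * _).
  rewrite (bigD1 idx1) //= i1E eqxx mulr1 big1 ?addr0 // => j Hj.
  by rewrite (_ : (j == 1%N :> nat) = false) ?mulr0 //; apply/negbTE; rewrite -i1E; exact: Hj.
case: ifP => Hk.
  have Hk' : (k.+1 < d.+1)%N by rewrite ltnS; case/andP: Hk.
  rewrite (bigD1 (inord k.+1)) //= inordK // eqxx /= mulr1 big1 ?addr0 // => j Hj.
  rewrite andbT (_ : (j == k.+1 :> nat) = false) ?mulr0 //; apply/negbTE.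
  by rewrite -eq_inord.
by rewrite big1 // => j _; rewrite andbF mulr0.
Qed.

Lemma Cop_coord0 (v : V) : Cop v 0 ord0 = 0.
Proof. by rewrite Cop_coord /= Lcoef0 mulr0 addr0. Qed.

Lemma Cop_e_succ (i : nat) : (0 < i < d)%N -> Cop (ev (inord i.+1)) = ev (inord i).
Proof.
case/andP=> i0 id; apply/rowP => k; rewrite Cop_coord !ev_coord eq_inord ?ltnS // i1E.
rewrite eqSS eq_sym (negbTE (lt0n_neq0 i0)) mul0r add0r.
have ilt : (i < d.+1)%N by apply: ltn_trans id _.
rewrite eq_inord //.
case: ifP => Hk.
  rewrite eq_inord ?ltnS // inordK ?eqSS //.
  by rewrite ltnS; case/andP: Hk.
case: eqP => // Hki; exfalso; move/negbT: Hk; rewrite Hki inordK // negb_and -!leqNgt => /orP[] H; lia.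
Qed.

Lemma Cop_e1 : Cop (ev idx1) = avecv.
Proof.
apply/rowP => k; rewrite Cop_coord !ev_coord eqxx mul1r mxE.
case: ifP => Hk; last by rewrite addr0.
rewrite -(inj_eq val_inj) /= inordK; last by rewrite ltnS; case/andP: Hk.
by rewrite i1E eqSS; case/andP: Hk => /lt0n_neq0/negbTE -> _; rewrite addr0.
Qed.

Lemma Cop_e0 : Cop (ev ord0) = 0.
Proof.
apply/rowP => k; rewrite Cop_coord !ev_coord mxE.
rewrite -(inj_eq val_inj) /= i1E mul0r add0r.
case: ifP => Hk //.
by rewrite -(inj_eq val_inj) /= inordK //; rewrite ltnS; case/andP: Hk.
Qed.

Lemma CopD (v w : V) : Cop (v + w) = Cop v + Cop w.
Proof. exact: mulmxDl. Qed.
Lemma CopZ (c : R) (v : V) : Cop (c *: v) = c *: Cop v.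
Proof. by rewrite /Cop scalemxAl. Qed.
Lemma CopB (v w : V) : Cop (v - w) = Cop v - Cop w.
Proof. exact: mulmxBl. Qed.
Lemma Cop0 : Cop 0 = 0.
Proof. exact: mul0mx. Qed.

Definition Cn (n : nat) (v : V) : V := v *m (Cmx ^+ n).
Lemma CnS n v : Cn n.+1 v = Cop (Cn n v).
Proof. by rewrite /Cn /Cop exprSr mulmxA. Qed.
Lemma CnSr n v : Cn n.+1 v = Cn n (Cop v).
Proof. by rewrite /Cn /Cop exprS mulmxA. Qed.
Lemma Cn0 v : Cn 0 v = v.
Proof. by rewrite /Cn expr0 mulmx1. Qed.
Lemma CnD n m v : Cn (n + m) v = Cn n (Cn m v).
Proof. by rewrite /Cn addnC exprD mulmxA. Qed.
Lemma CnDv n (v w : V) : Cn n (v + w) = Cn n v + Cn n w.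
Proof. exact: mulmxDl. Qed.
Lemma CnZ n (c : R) (v : V) : Cn n (c *: v) = c *: Cn n v.
Proof. by rewrite /Cop /Cn scalemxAl. Qed.
Lemma CnB n (v w : V) : Cn n (v - w) = Cn n v - Cn n w.
Proof. exact: mulmxBl. Qed.
Lemma Cn_0 n : Cn n 0 = 0.
Proof. exact: mul0mx. Qed.

End Vec.


Section M1.
Variables (p d : nat) (a : 'I_d -> zp p).
Hypothesis Hp : prime p.
Hypothesis Hd : (2 <= d)%N.
Hypothesis Ha : forall i : 'I_d, (i : nat) = d.-1 -> a i != 0.
Local Notation R := (zp p).
Local Notation V := 'rV[R]_d.+1.
Local Notation P := (p%:R : R).
Local Notation Cop := (Cop a).

Definition Hs (v : V) : Prop := forall i : 'I_d.+1, (i < d)%N -> exists w, v 0 i = P * w.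

Lemma Hs_sub : submodule Hs.
Proof.
split.
- by move=> i _; exists 0; rewrite mxE mulr0.
- move=> x y Hx Hy i Hi; have [w1 E1] := Hx i Hi; have [w2 E2] := Hy i Hi.
  by exists (w1 + w2); rewrite mxE E1 E2 mulrDr.
- move=> c x Hx i Hi; have [w1 E1] := Hx i Hi.
  by exists (c * w1); rewrite mxE E1 mulrCA.
Qed.

Lemma Hs_P (v : V) : Hs (P *: v).
Proof. by move=> i _; exists (v 0 i); rewrite mxE. Qed.

Lemma ord0_lt : ((ord0 : 'I_d.+1) < d)%N.
Proof. by apply: leq_trans Hd. Qed.

Lemma Hs_br : forall x y, Hs x -> Hs y -> Hs (Lbracket a x y).
Proof.
move=> x y Hx Hy; rewrite Lbr_E.
have [w1 E1] := Hx ord0 ord0_lt; have [w2 E2] := Hy ord0 ord0_lt.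
by rewrite E1 E2 -!scalerA -scalerBr; apply: Hs_P.
Qed.

Lemma Hs_subalg : subalgebra (Lbracket a) (fun _ => True) Hs.
Proof. by split; [exact: Hs_sub | by [] | exact: Hs_br]. Qed.

Lemma sval_sub_nat (m n : nat) : (m < p)%N -> (n < p)%N ->
  sval (m%:R - n%:R : R) 1 = modz (m%:Z - n%:Z) p%:Z.
Proof.
move=> Hm Hn.
have Em : modz m%:Z p%:Z = m by apply: modz_small; rewrite lez_nat ltz_nat leq0n.
have En : modz n%:Z p%:Z = n by apply: modz_small; rewrite lez_nat ltz_nat leq0n.
by rewrite sval_add sval_opp !sval_nat zpM1 // Em En modzDmr.
Qed.

Lemma natr_modP (m n : nat) : (m < p)%N -> (n < p)%N ->
  (exists w, (m%:R - n%:R : R) = P * w) -> m = n.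
Proof.
move=> Hm Hn [w Hw].
have H1 : sval (m%:R - n%:R : R) 1 = sval (P * w) 1 by rewrite Hw.
move: H1; rewrite sval_sub_nat // sval_mul sval_nat zpM1 // modzz mul0r mod0z.
move/dvdz_mod0P; rewrite -eqz_mod_dvd => /eqP.
by rewrite !modz_small ?lez_nat ?ltz_nat ?leq0n // => [[]].
Qed.

Lemma sval1_lt (x : R) : (`|sval x 1| < p)%N.
Proof.
have := sval_lt Hp x 1; have := sval_ge0 Hp x 1; rewrite zpM1 //.
by case: (sval x 1) => // n _; rewrite ltz_nat.
Qed.

Lemma Hs_findex : finite_index (fun _ => True) Hs.
Proof.
pose T := {ffun 'I_d -> 'I_p}.
have d0 : (0 < d)%N by apply: leq_trans Hd.
pose k0 : 'I_d := Ordinal d0.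
pose vec (t : T) : V := \row_(i < d.+1) (if (i < d)%N then ((t (insubd k0 (i : nat)) : nat)%:R : R) else 0).
exists #|T|; exists (fun i => vec (enum_val i)); split => //.
- move=> i j H; apply: (can_inj enum_valK); apply/ffunP => k.
  apply: val_inj; apply: natr_modP; [exact: ltn_ord | exact: ltn_ord | ].
  have Hk : (widen_ord (leqnSn d) k < d)%N by rewrite /= ltn_ord.
  have [w Hw] := H (widen_ord (leqnSn d) k) Hk; exists w; rewrite -Hw !mxE Hk.
  by rewrite (_ : insubd k0 (widen_ord (leqnSn d) k : nat) = k) //; apply: val_inj; rewrite val_insubd /= ltn_ord.
- move=> x _.
  pose t : T := [ffun k : 'I_d => Ordinal (sval1_lt (x 0 (widen_ord (leqnSn d) k)))].
  exists (enum_rank t); rewrite enum_rankK => i Hi.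
  apply: zp_div1 => //; rewrite !mxE Hi ffunE /=.
  rewrite (_ : widen_ord (leqnSn d) (insubd k0 (i : nat)) = i); last by apply: val_inj; rewrite /= val_insubd Hi.
  rewrite sval_nat zpM1 // modzDmr.
  have -> : (`|sval (x 0 i) 1|%:Z) = sval (x 0 i) 1 by rewrite gez0_abs // sval_ge0.
  by rewrite -zpM1 // zp_red subrr mod0z.
Qed.

End M1.


Section M2.
Variables (p d : nat) (a : 'I_d -> zp p).
Hypothesis Hp : prime p.
Hypothesis Hd : (2 <= d)%N.
Hypothesis Ha : forall i : 'I_d, (i : nat) = d.-1 -> a i != 0.
Local Notation R := (zp p).
Local Notation V := 'rV[R]_d.+1.
Local Notation P := (p%:R : R).
Local Notation Cop := (Cop a).
Local Notation Hs := (@Hs p d).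
Local Notation br := (Lbracket a).
Local Notation ev := (ev p).
Local Notation i1 := (idx1 d).
Local Notation avec := (@avecv p d a).
Local Notation Cn := (Cn a).

Variables (N : V -> Prop) (phi : V -> V).
Hypothesis VE : virtual_endo br Hs N phi p.

Lemma Lbr_E' (u v : V) : br u v = u 0 ord0 *: Cop v - v 0 ord0 *: Cop u.
Proof. exact: Lbr_E. Qed.

Lemma N0 : N 0. Proof. by move: VE; rewrite /virtual_endo /subalgebra /submodule => -[[[]]]. Qed.
Lemma ND x y : N x -> N y -> N (x + y). Proof. by move: VE; rewrite /virtual_endo /subalgebra /submodule => -[[[_ H _] _ _] _ _ _]; exact: H. Qed.
Lemma NZ (c : R) x : N x -> N (c *: x). Proof. by move: VE; rewrite /virtual_endo /subalgebra /submodule => -[[[_ _ H] _ _] _ _ _]; exact: H. Qed.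
Lemma NH x : N x -> Hs x. Proof. by move: VE; rewrite /virtual_endo /subalgebra /submodule => -[[_ H _] _ _ _]; exact: H. Qed.
Lemma Nbr x y : N x -> N y -> N (br x y). Proof. by move: VE; rewrite /virtual_endo /subalgebra /submodule => -[[_ _ H] _ _ _]; exact: H. Qed.
Lemma Nidx : has_index Hs N p. Proof. by case: VE. Qed.
Lemma phiH x : N x -> Hs (phi x). Proof. by case: VE => _ _ H _; exact: H. Qed.
Lemma phiD x y : N x -> N y -> phi (x + y) = phi x + phi y. Proof. by move: VE; rewrite /virtual_endo /subalgebra /submodule => -[_ _ _ [H _ _]]; exact: H. Qed.
Lemma phiZ (c : R) x : N x -> phi (c *: x) = c *: phi x. Proof. by move: VE; rewrite /virtual_endo /subalgebra /submodule => -[_ _ _ [_ H _]]; exact: H. Qed.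
Lemma phiBr x y : N x -> N y -> phi (br x y) = br (phi x) (phi y). Proof. by move: VE; rewrite /virtual_endo /subalgebra /submodule => -[_ _ _ [_ _ H]]; exact: H. Qed.

Lemma NN x : N x -> N (- x). Proof. by move=> Hx; rewrite -scaleN1r; apply: NZ. Qed.
Lemma NB x y : N x -> N y -> N (x - y). Proof. by move=> Hx Hy; apply: ND => //; apply: NN. Qed.
Lemma phi0 : phi 0 = 0.
Proof. by have := phiZ 0 N0; rewrite !scale0r. Qed.
Lemma phiB x y : N x -> N y -> phi (x - y) = phi x - phi y.
Proof.
move=> Hx Hy; rewrite phiD //; last by apply: NN.
by rewrite -scaleN1r phiZ // scaleN1r.
Qed.

Lemma Nunit (m : nat) y : (0 < m < p)%N -> N (m%:R *: y) -> N y.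
Proof.
move=> Hm Hy; have [u Hu] := zp_unit Hp Hm.
by have := NZ u Hy; rewrite scalerA Hu scale1r.
Qed.

Lemma Npair (b j j' : nat) y : j != j' -> (j <= b)%N -> (j' <= b)%N ->
  N (j%:R *: y - j'%:R *: y) -> exists m, (0 < m <= b)%N /\ N (m%:R *: y).
Proof.
move=> ne Hj Hj' H.
case: (ltngtP j j') => Hjj; last by rewrite Hjj eqxx in ne.
- exists (j' - j)%N; split; first by apply/andP; split; [rewrite subn_gt0 | apply: leq_trans (leq_subr _ _) _].
  by rewrite natrB ?(ltnW Hjj) // scalerBl -opprB; apply: NN.
- exists (j - j')%N; split; first by apply/andP; split; [rewrite subn_gt0 | apply: leq_trans (leq_subr _ _) _].
  by rewrite natrB ?(ltnW Hjj) // scalerBl.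
Qed.

Lemma NP y : Hs y -> N (P *: y).
Proof.
move=> Hy; case: Nidx => r [_ _ rcov].
have Hjy : forall j : 'I_p.+1, exists i, N ((j : nat)%:R *: y - r i).
  by move=> j; apply: rcov; case: (Hs_sub p d) => _ _; apply.
have [g Hg] := choice Hjy.
case: (pselect (exists j j', g j = g j' /\ j != j')) => [[j [j' [E ne]]]|nE]; last first.
  have inj : injective g.
    move=> x x' E; apply/eqP; apply/negPn/negP => ne; apply: nE; exists x, x'; split => //.
  by have := @leq_card _ _ g inj; rewrite !card_ord ltnn.
have := NB (Hg j) (Hg j'); rewrite E opprB addrA subrK => Hd'.
have [m [/andP[m0 mp] Hm]] := Npair ne (ltn_ord j) (ltn_ord j') Hd'.
move: mp; rewrite leq_eqVlt => /orP[/eqP Em|mp]; first by rewrite Em in Hm.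
by apply: NZ; apply: (@Nunit m) => //; rewrite m0.
Qed.

Lemma Ncov y : Hs y -> ~ N y -> forall x, Hs x -> exists j, (j < p)%N /\ N (x - j%:R *: y).
Proof.
move=> Hy Ny x Hx; case: Nidx => r [_ _ rcov].
have Hjy : forall j : 'I_p, exists i, N ((j : nat)%:R *: y - r i).
  by move=> j; apply: rcov; case: (Hs_sub p d) => _ _; apply.
have [g Hg] := choice Hjy.
have inj : injective g.
  move=> j j' E; apply/eqP; apply/negPn/negP => ne.
  have := NB (Hg j) (Hg j'); rewrite E opprB addrA subrK => Hd'.
  have jb : forall k : 'I_p, ((k : nat) <= p.-1)%N by move=> k; rewrite -ltnS prednK ?ltn_ord ?prime_gt0.
  have [m [/andP[m0 mp] Hm]] := Npair ne (jb j) (jb j') Hd'.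
  apply: Ny; apply: (@Nunit m) => //; rewrite m0 /=.
  by apply: leq_ltn_trans mp _; rewrite prednK ?prime_gt0.
have [ginv gK Kg] := injF_bij inj.
have [i Hi] := rcov x Hx.
exists (ginv i); split; first exact: ltn_ord.
have := NB Hi (Hg (ginv i)); rewrite Kg.
by rewrite opprB addrA subrK.
Qed.

Lemma phi_sum (c : 'I_d.+1 -> R) (F : 'I_d.+1 -> V) : (forall k, N (F k)) ->
  N (\sum_k c k *: F k) /\ phi (\sum_k c k *: F k) = \sum_k c k *: phi (F k).
Proof.
move=> HF.
apply: (big_rec2 (fun y1 y2 => N y1 /\ phi y1 = y2)); first by split; [exact: N0 | exact: phi0].
move=> k y1 y2 _ [Hy1 Hy2]; split; first by apply: ND => //; apply: NZ.
by rewrite phiD ?phiZ ?Hy2 //; apply: NZ.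
Qed.

Lemma pow_dom_ok (I : V -> Prop) : (forall x, I x -> N x) -> (forall x, I x -> I (phi x)) ->
  forall m x, I x -> pow_dom Hs N phi m x.
Proof.
move=> IN Iphi m x Ix.
have Iit : forall k, I (iter k phi x) by elim=> //= k IH; apply: Iphi.
elim: m => [|m IH] /=; first by apply: NH; apply: IN.
by split => //; apply: IN.
Qed.

Lemma coord_sum (F : 'I_d.+1 -> V) (c : 'I_d.+1 -> R) j :
  (\sum_k c k *: F k) 0 j = \sum_k c k * F k 0 j.
Proof. by rewrite summxE; apply: eq_bigr => k _; rewrite mxE. Qed.

Lemma ev0_ne (k : 'I_d.+1) : (0 < k)%N -> ev k 0 ord0 = 0.
Proof. by move=> Hk; rewrite ev_coord; case: eqP => // E; rewrite -E in Hk. Qed.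

Lemma iso : (forall w, N w -> w 0 ord0 = 0 -> phi (P ^+ 2 *: Cop w) 0 ord0 = 0) ->
  forall z, N z -> z 0 ord0 = 0 -> phi z 0 ord0 = 0.
Proof.
move=> Hiso.
pose b (k : 'I_d.+1) : V := P ^+ 4 *: ev k.
have Nb : forall k, N (b k).
  by move=> k; rewrite /b exprS -scalerA; apply: NP; rewrite exprS -scalerA; apply: Hs_P.
have NPP : forall v, N (P ^+ 2 *: v).
  by move=> v; rewrite exprS -scalerA; apply: NP; apply: Hs_P.
have S1 : forall k : 'I_d.+1, (0 < k < d)%N -> phi (b k) 0 ord0 = 0.
  move=> k Hk; have Hk1 : (k.+1 < d.+1)%N by rewrite ltnS; case/andP: Hk.
  have := Hiso (P ^+ 2 *: ev (inord k.+1)) (NPP _).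
  rewrite mxE ev0_ne ?inordK // mulr0 => /(_ erefl).
  rewrite CopZ Cop_e_succ // scalerA -exprD inord_val; exact.
have S2 : phi (P ^+ 4 *: avec) 0 ord0 = 0.
  have := Hiso (P ^+ 2 *: ev i1) (NPP _).
  rewrite mxE ev0_ne ?i1E // mulr0 => /(_ erefl).
  by rewrite CopZ Cop_e1 // scalerA -exprD.
have E2 : P ^+ 4 *: avec = \sum_(k < d.+1) Lcoef a k *: b k.
  rewrite {1}(row_sum_delta (avec)) scaler_sumr; apply: eq_bigr => k _.
  by rewrite /b !scalerA mxE mulrC.
have [_ Hphi2] := phi_sum (fun k : 'I_d.+1 => Lcoef a k) Nb.
move: S2; rewrite E2 Hphi2 coord_sum (bigD1 ord_max) //= big1 ?addr0; last first.
  move=> k Hk; case: (posnP k) => Hk0.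
    by rewrite (_ : k = ord0) ?Lcoef0 ?mul0r //; apply: val_inj.
  rewrite S1 ?mulr0 // Hk0 /=; move: (ltn_ord k); rewrite ltnS leq_eqVlt => /orP[/eqP E|] //.
  by exfalso; move/negP: Hk; apply; apply/eqP; apply: val_inj.
move=> Smax.
have Sd : phi (b ord_max) 0 ord0 = 0.
  case: (zp_mul_eq0 Hp Smax) => // /eqP; rewrite /= (negbTE (Lcoefd Hd Ha)) //.
have S3 : forall k : 'I_d.+1, k != ord0 -> phi (b k) 0 ord0 = 0.
  move=> k Hk; move: (ltn_ord k); rewrite ltnS leq_eqVlt => /orP[/eqP E|Hkd].
    by rewrite (_ : k = ord_max) //; apply: val_inj.
  apply: S1; rewrite Hkd andbT lt0n; apply: contra Hk => /eqP E.
  by apply/eqP; apply: val_inj.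
move=> z Nz z0.
have Ez : P ^+ 4 *: z = \sum_(k < d.+1) z 0 k *: b k.
  rewrite {1}(row_sum_delta z) scaler_sumr; apply: eq_bigr => k _.
  by rewrite /b !scalerA mulrC.
have [_ Hz] := phi_sum (fun k : 'I_d.+1 => z 0 k) Nb.
have : phi (P ^+ 4 *: z) 0 ord0 = 0.
  rewrite Ez Hz coord_sum big1 // => k _; case: (eqVneq k ord0) => [->|Hk].
    by rewrite z0 mul0r.
  by rewrite S3 ?mulr0.
rewrite phiZ // mxE => H0; case: (zp_mul_eq0 Hp H0) => // /eqP.
by rewrite (negbTE (Pexp_neq0 Hp 4)).
Qed.

Lemma crd_sub (x y : V) k : (x - y) 0 k = x 0 k - y 0 k. Proof. by rewrite !mxE. Qed.
Lemma crd_add (x y : V) k : (x + y) 0 k = x 0 k + y 0 k. Proof. by rewrite !mxE. Qed.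
Lemma crd_scale (c : R) (x : V) k : (c *: x) 0 k = c * x 0 k. Proof. by rewrite !mxE. Qed.
Lemma br_coord0 (u v : V) : br u v 0 ord0 = 0.
Proof. by rewrite Lbr_E' crd_sub !crd_scale !Cop_coord0 // !mulr0 subr0. Qed.

Lemma Hs_emax : Hs (ev ord_max).
Proof.
move=> i Hi; exists 0; rewrite ev_coord mulr0.
by case: eqP => // E; move: Hi; rewrite E /= ltnn.
Qed.

Lemma emax_neq0 : ev (@ord_max d) != 0.
Proof.
apply/negP => /eqP /rowP /(_ ord_max); rewrite ev_coord eqxx mxE => /eqP.
by rewrite oner_eq0.
Qed.

Lemma d_pos : (0 < d)%N.
Proof. by apply: leq_trans Hd. Qed.

Lemma caseB : ~ (exists n0, N n0 /\ n0 0 ord0 = P) -> ~ simple_ve br Hs N phi.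
Proof.
move=> nE Hsimple.
pose I := fun v : V => Hs v /\ v 0 ord0 = 0.
have IN : forall y, I y -> N y.
  move=> y [Hy y0]; apply: contrapT => Ny.
  have [j [_ Hj]] := Ncov Hy Ny (Hs_P (ev ord0)).
  apply: nE; exists (P *: ev ord0 - j%:R *: y); split => //.
  by rewrite !mxE y0 mulr0 subr0 !eqxx /= mulr1.
have Hiso : forall w, N w -> w 0 ord0 = 0 -> phi (P ^+ 2 *: Cop w) 0 ord0 = 0.
  move=> w Nw w0.
  have Nn0 : N (P ^+ 2 *: ev ord0) by rewrite exprS -scalerA; apply: NP; apply: Hs_P.
  have E : br (P ^+ 2 *: ev ord0) w = P ^+ 2 *: Cop w.
    by rewrite Lbr_E' w0 scale0r subr0 crd_scale ev_coord eqxx mulr1.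
  by rewrite -E phiBr // br_coord0.
have iso' := iso Hiso.
have Hideal : ideal br Hs I.
  split.
  - case: (Hs_sub p d) => H0 HD HZ; split.
    + by split => //; rewrite mxE.
    + by move=> x y [Hx x0] [Hy y0]; split; [exact: HD | rewrite crd_add x0 y0 addr0].
    + by move=> c x [Hx x0]; split; [exact: HZ | rewrite crd_scale x0 mulr0].
  - by move=> x [].
  - move=> x y Hx [Hy y0]; rewrite Lbr_E' y0 scale0r subr0; split.
      have [w Hw] := Hx ord0 d_pos.
      by rewrite Hw -scalerA; apply: Hs_P.
    by rewrite crd_scale Cop_coord0 // mulr0.
have IP : forall x, I x -> I (phi x).
  move=> x [Hx x0]; split; first by apply: phiH; apply: IN.
  by apply: iso' => //; apply: IN.
have Hinv : phi_invariant Hs N phi I by split => //; apply: pow_dom_ok.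
have Imax : I (ev ord_max) by split; [exact: Hs_emax | apply: ev0_ne; exact: d_pos].
have := Hsimple I Hideal Hinv (ev ord_max) Imax.
by move/eqP; rewrite (negbTE emax_neq0).
Qed.

Lemma scaleP_inj (x y : V) : P *: x = P *: y -> x = y.
Proof.
move=> H; apply/rowP => k; have := congr1 (fun v : V => v 0 k) H.
rewrite !crd_scale; exact: zp_mulIf (P_neq0 Hp).
Qed.

Lemma Cmax : Cop (ev ord_max) = ev (inord d.-1).
Proof.
have H1 : (0 < d.-1 < d)%N by apply/andP; split; lia.
rewrite -(Cop_e_succ a Hp Hd H1); congr (Cop (ev _)); apply: val_inj.
by rewrite /= inordK prednK ?d_pos.
Qed.

Lemma em1_0 : ev (inord d.-1 : 'I_d.+1) 0 ord0 = 0.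
Proof.
apply: ev0_ne; rewrite inordK; last by rewrite ltnS leq_pred.
by rewrite -ltnS prednK ?d_pos.
Qed.

Lemma emax_0 : ev (@ord_max d) 0 ord0 = 0.
Proof. by apply: ev0_ne; exact: d_pos. Qed.

Lemma caseA : (exists n0, N n0 /\ n0 0 ord0 = P) -> ~ simple_ve br Hs N phi.
Proof.
move=> [n0 [Nn0 n00]] Hsimple.
have Hiso : forall w, N w -> w 0 ord0 = 0 -> phi (P ^+ 2 *: Cop w) 0 ord0 = 0.
  move=> w Nw w0; have NPw : N (P *: w) by apply: NZ.
  have E : br n0 (P *: w) = P ^+ 2 *: Cop w.
    by rewrite Lbr_E' n00 crd_scale w0 mulr0 scale0r subr0 CopZ scalerA expr2.
  by rewrite -E phiBr // br_coord0.
have iso' := iso Hiso.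
have [c Hc] : exists c, phi n0 0 ord0 = P * c by apply: (phiH Nn0); exact: d_pos.
have A1 : forall z, N z -> z 0 ord0 = 0 ->
    [/\ N (P *: Cop z), (P *: Cop z) 0 ord0 = 0 & phi (P *: Cop z) = (P * c) *: Cop (phi z)].
  move=> z Nz z0; have E : br n0 z = P *: Cop z by rewrite Lbr_E' n00 z0 scale0r subr0.
  split; first by rewrite -E; apply: Nbr.
    by rewrite crd_scale Cop_coord0 // mulr0.
  by rewrite -E phiBr // Lbr_E' Hc iso' // scale0r subr0.
pose em1 : V := ev (inord d.-1).
pose w : V := P *: em1.
have A3 : N w.
  case: (pselect (N (ev ord_max))) => Nmax.
    by have [H _ _] := A1 _ Nmax emax_0; rewrite Cmax in H.
  have [j [jp Hj]] := Ncov Hs_emax Nmax (Hs_P em1).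
  have u0 : (w - j%:R *: ev ord_max) 0 ord0 = 0.
    by rewrite crd_sub !crd_scale em1_0 emax_0 !mulr0 subr0.
  have [Nu _ _] := A1 _ Hj u0.
  have NPCw : N (P *: Cop w) by rewrite /w CopZ; apply: NP; apply: Hs_P.
  have := NB NPCw Nu; rewrite /w CopB !CopZ Cmax scalerBr opprB addrC subrK scalerA mulrC -scalerA.
  move=> Njw; case: (eqVneq j 0%N) => j0.
    by move: Hj; rewrite j0 scale0r subr0.
  by apply: (@Nunit j) => //; rewrite lt0n j0.
have Nz0 : N (P *: ev ord_max) by apply: NP; exact: Hs_emax.
have z00 : (P *: ev (@ord_max d)) 0 ord0 = 0 by rewrite crd_scale emax_0 mulr0.
pose zeta := phi (P *: ev ord_max).
have zH : Hs zeta by apply: phiH.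
have z0 : zeta 0 ord0 = 0 by apply: iso'.
have A4 : phi w = c *: Cop zeta.
  have [_ _ E1] := A1 _ Nz0 z00.
  move: E1; rewrite CopZ Cmax -/em1 -/w phiZ // -scalerA; exact: scaleP_inj.
have dm1 : ((inord d.-1 : 'I_d.+1) < d)%N by rewrite inordK; lia.
have Hcz : forall k : 'I_d.+1, exists t, c * zeta 0 k = P * t.
  move=> k; case: (ltnP k d) => Hk.
    by have [s Hs'] := zH k Hk; exists (c * s); rewrite Hs' mulrCA.
  have [t Ht] := phiH A3 dm1.
  have i1d : (i1 < d)%N by rewrite i1E.
  have [s Hs1] := zH i1 i1d.
  exists (t - c * s * Lcoef a (inord d.-1 : 'I_d.+1)).
  move: Ht; rewrite A4 crd_scale Cop_coord // Hs1.
  have Hc1 : (0 < (inord d.-1 : 'I_d.+1) < d)%N.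
    by rewrite dm1 andbT inordK; lia.
  rewrite Hc1 (_ : inord (inord d.-1 : 'I_d.+1).+1 = k); last first.
    have E1 : ((inord d.-1 : 'I_d.+1) : nat) = d.-1 by rewrite inordK; lia.
    apply: val_inj => /=; rewrite E1 inordK; last by lia.
    by move: (ltn_ord k) Hk; lia.
  move=> Ht; rewrite mulrBr -Ht; ring.
have [xf Hxf] := choice Hcz.
pose xi : V := \row_k xf k.
have Cxi : c *: zeta = P *: xi.
  by apply/rowP => k; rewrite crd_scale crd_scale mxE Hxf.
pose zj (j : nat) : V := P ^+ j.+1 *: Cn j (ev ord_max).
have Z : forall j, [/\ N (zj j), zj j 0 ord0 = 0 & phi (zj j) = (P * c) ^+ j *: Cn j zeta].
  elim=> [|j [Nj j0 Pj]].
    by rewrite /zj expr1 !Cn0 expr0 scale1r.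
  have E : zj j.+1 = P *: Cop (zj j) by rewrite /zj CopZ -CnS scalerA -exprS.
  have [H1 H2 H3] := A1 _ Nj j0.
  by rewrite E; split => //; rewrite H3 Pj CopZ -CnS scalerA -exprS.
have Cdm : forall m, (m < d)%N -> Cn m (ev ord_max) = ev (inord (d - m)).
  elim=> [|m IH] Hm.
    rewrite Cn0 subn0; congr ev; apply: val_inj; rewrite /= inordK //.
  rewrite CnS IH ?(ltnW Hm) //.
  have H1 : (0 < d - m.+1 < d)%N by apply/andP; split; lia.
  rewrite (_ : (inord (d - m) : 'I_d.+1) = inord (d - m.+1).+1); first exact: Cop_e_succ.
  by congr inord; lia.
have Cd0 : Cn d (ev ord0) = 0.
  have -> : Cn d (ev ord0) = Cn d.-1.+1 (ev ord0) by rewrite prednK // d_pos.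
  by rewrite CnSr Cop_e0 // Cn_0.
pose I := fun v : V => exists u, v = P ^+ (2 * d) *: Cn d u.
have gk : forall k : 'I_d.+1,
    N (P ^+ (2 * d) *: Cn d (ev k)) /\ I (phi (P ^+ (2 * d) *: Cn d (ev k))).
  move=> k; case: (eqVneq (k : nat) 0%N) => [k0|kpos].
    rewrite (_ : k = ord0); last by apply: val_inj.
    rewrite Cd0 scaler0 phi0; split; first exact: N0.
    by exists 0; rewrite Cn_0 scaler0.
  set kk := (k : nat).
  have Ek : ev k = Cn (d - kk) (ev ord_max).
    rewrite Cdm; last by move: kpos; rewrite /kk; lia.
    congr ev; apply: val_inj; rewrite /= inordK; move: kpos (ltn_ord k); rewrite /kk; lia.
  set m := (d + (d - kk))%N.
  have Eg : P ^+ (2 * d) *: Cn d (ev k) = P ^+ kk.-1 *: zj m.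
    rewrite Ek -CnD /zj scalerA -exprD; congr (_ *: _); congr (_ ^+ _).
    by move: kpos (ltn_ord k); rewrite /m /kk; lia.
  have [Nm _ Pm] := Z m.
  rewrite Eg; split; first by apply: NZ.
  rewrite phiZ // Pm.
  exists (c ^+ m.-1 *: Cn (d - kk) xi).
  rewrite CnZ -CnD -/m.
  have Hm : c ^+ m = c * c ^+ m.-1.
    rewrite -exprS prednK //; rewrite /m; lia.
  have E3 : (P * c) ^+ m *: Cn m zeta = (P ^+ m * c ^+ m.-1) *: Cn m (c *: zeta).
    by rewrite CnZ scalerA exprMn Hm; congr (_ *: _); ring.
  rewrite E3 Cxi CnZ !scalerA; congr (_ *: _).
  have -> : (2 * d)%N = (kk.-1 + m).+1 by move: kpos (ltn_ord k); rewrite /m /kk; lia.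
  by rewrite exprS exprD; ring.
have Cd_0 : forall u : V, Cn d u 0 ord0 = 0.
  move=> u; have -> : Cn d u = Cn d.-1.+1 u by rewrite prednK // d_pos.
  by rewrite CnS Cop_coord0.
have Isub : submodule I.
  split.
  - by exists 0; rewrite Cn_0 scaler0.
  - by move=> x y [u ->] [u' ->]; exists (u + u'); rewrite CnDv scalerDr.
  - by move=> c' x [u ->]; exists (c' *: u); rewrite CnZ !scalerA mulrC.
have IN : forall v, I v -> N v.
  move=> v [u ->]; have -> : (2 * d)%N = (2 * d - 2).+2 by lia.
  by rewrite exprS -scalerA; apply: NP; rewrite exprS -scalerA; apply: Hs_P.
have Iphi : forall v, I v -> I (phi v).
  move=> v [u ->].
  have Eu : P ^+ (2 * d) *: Cn d u = \sum_(k < d.+1) u 0 k *: (P ^+ (2 * d) *: Cn d (ev k)).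
    rewrite {1}(row_sum_delta u) /Cn mulmx_suml scaler_sumr; apply: eq_bigr => k _.
    by rewrite -scalemxAl !scalerA mulrC.
  rewrite Eu; have [_ ->] := phi_sum (fun k => u 0 k) (fun k => proj1 (gk k)).
  case: Isub => I0 ID IZ.
  apply: (big_ind I) => //.
  by move=> k _; apply: IZ; exact: (proj2 (gk k)).
have Hideal : ideal br Hs I.
  split => //.
  - by move=> v Iv; apply: NH; apply: IN.
  - move=> x v Hx [u ->].
    exists (x 0 ord0 *: Cop u).
    rewrite Lbr_E' crd_scale Cd_0 mulr0 scale0r subr0.
    by rewrite CopZ CnZ !scalerA mulrC -CnS CnSr.
have Hinv : phi_invariant Hs N phi I by split => //; apply: pow_dom_ok.
have Inz : I (P ^+ (2 * d) *: Cn d (ev ord_max)) by exists (ev ord_max).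
have := Hsimple I Hideal Hinv _ Inz => /rowP /(_ ord_max).
have -> : Cn d (ev ord_max) = avec.
  have -> : Cn d (ev ord_max) = Cn d.-1.+1 (ev ord_max) by rewrite prednK // d_pos.
  rewrite CnS Cdm; last by lia.
  rewrite (_ : (inord (d - d.-1) : 'I_d.+1) = i1); first exact: Cop_e1.
  by rewrite /idx1; congr inord; lia.
rewrite crd_scale !mxE => /eqP.
by rewrite (negbTE (zp_mul_neq0 Hp (Pexp_neq0 Hp _) (Lcoefd Hd Ha))).
Qed.

End M2.


Theorem corollary1p26 (p : nat) (d : nat) (a : 'I_d -> zp p) :
  prime p -> (2 <= d)%N ->
  (forall i : 'I_d, (i : nat) = d.-1 -> a i != 0) ->
  exists H : 'rV[zp p]_d.+1 -> Prop,
    subalgebra (Lbracket a) (fun _ => True) H /\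
    finite_index (fun _ => True) H /\
    ~ self_similar_index (Lbracket a) H p.
Proof.
move=> Hp Hd Ha; exists (@Hs p d); split; first exact: Hs_subalg.
split; first exact: Hs_findex.
move=> [N [phi [VE Hsimple]]].
case: (pselect (exists n0, N n0 /\ n0 0 ord0 = p%:R)) => H.
- exact: (caseA Hp Hd Ha VE H Hsimple).
- exact: (caseB Hp Hd Ha VE H Hsimple).
Qed.
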